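(* Let $q$ be an odd prime power, $f$ a planar function on $\mathbb F_{q^2}$, and $\kappa:\mathbb F_{q^2}\to\mathbb F_{q^2}$, $x\mapsto\bar x$, an additive map such that (a) $\kappa(\kappa(x))=x$ for all $x$; (b) $\overline{f(x)}=f(\bar x)$ for all $x$; (c) $\#\{y\in\mathbb F_{q^2}:y+\bar y=f(x+\bar x)\}=q$ for each $x\in\mathbb F_{q^2}$. Let $\rho$ map the points of $\Pi(f)$ to lines by $(x,y)\mapsto L_{\bar x,\bar y}$, $(a)\mapsto N_{\bar a}$ for $a\in\mathbb F_{q^2}$, $(\infty)\mapsto L_\infty$. Then $\rho$ is a bijection from points to lines, and together with the map sending each line $\rho(P)$ to $P$ it is a unitary polarity of $\Pi(f)$, whose set of absolute points is the unital \[\mathcal U:=\{(x,y)\in\mathbb F_{q^2}^2:y+\bar y=f(x+\bar x)\}\cup\{(\infty)\}.\]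
   Context: A function $f:\mathbb F_{q^2}\to\mathbb F_{q^2}$ is planar if for every $a\neq0$ the map $x\mapsto f(x+a)-f(x)$ is a bijection. For planar $f$, $\Pi(f)$ is the projective plane (of order $q^2$) with points $(x,y)\in\mathbb F_{q^2}^2$ and $(a)$ for $a\in\mathbb F_{q^2}\cup\{\infty\}$, lines $L_{a,b}=\{(x,f(x+a)-b):x\in\mathbb F_{q^2}\}\cup\{(a)\}$, $N_a=\{(a,y):y\in\mathbb F_{q^2}\}\cup\{(\infty)\}$ ($a,b\in\mathbb F_{q^2}$), $L_\infty=\{(a):a\in\mathbb F_{q^2}\cup\{\infty\}\}$. A polarity is a bijection of points onto lines and lines onto points, of order two, preserving incidence (P on $\ell$ iff $\rho(\ell)$ on $\rho(P)$). A point $P$ is absolute if $P\in\rho(P)$; a polarity of a plane of order $q^2$ is unitary if it has exactly $q^3+1$ absolute points. A unital is a set of $q^3+1$ points meeting every line in $1$ or $q+1$ points. *)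

(* Defs.v *)
From mathcomp Require Import all_boot all_order all_algebra all_field.
Set Implicit Arguments. Unset Strict Implicit. Unset Printing Implicit Defensive.
Import GRing.Theory.
Local Open Scope ring_scope.

(* Points:  inl (x, y)    = affine point (x, y)
            inr (Some a)  = point (a),  a in F
            inr None      = point (infinity)
   Lines:   inl (a, b)    = L_{a,b}
            inr (Some a)  = N_a
            inr None      = L_infinity *)
Definition pt (F : finFieldType) := ((F * F) + option F)%type.
Definition ln (F : finFieldType) := ((F * F) + option F)%type.

Definition planar (F : finFieldType) (f : F -> F) : Prop :=
  forall a : F, a != 0 -> bijective (fun x => f (x + a) - f x).

Definition incid (F : finFieldType) (f : F -> F) (P : pt F) (l : ln F) : bool :=
  match P, l with
  | inl (x, y), inl (a, b) => y == f (x + a) - b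
  | inl (x, _), inr (Some a) => x == a
  | inl _, inr None => false
  | inr (Some a), inl (a', _) => a == a'
  | inr (Some _), inr (Some _) => false
  | inr (Some _), inr None => true
  | inr None, inl _ => false
  | inr None, inr _ => true
  end.

Definition is_polarity (F : finFieldType) (f : F -> F)
  (rho : pt F -> ln F) (sigma : ln F -> pt F) : Prop :=
  cancel rho sigma /\ cancel sigma rho /\
  forall (P : pt F) (l : ln F), incid f P l = incid f (sigma l) (rho P).

Definition absolute_points (F : finFieldType) (f : F -> F)
  (rho : pt F -> ln F) : {set pt F} := [set P | incid f P (rho P)].

Definition is_unital (F : finFieldType) (f : F -> F) (q : nat) (U : {set pt F}) : Prop :=
  #|U| = (q ^ 3 + 1)%N /\
  forall l : ln F, #|[set P in U | incid f P l]| \in [:: 1%N; q.+1].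

Definition rho_kappa (F : finFieldType) (kappa : F -> F) (P : pt F) : ln F :=
  match P with
  | inl (x, y) => inl (kappa x, kappa y)
  | inr (Some a) => inr (Some (kappa a))
  | inr None => inr None
  end.

Definition U_kappa (F : finFieldType) (f kappa : F -> F) : {set pt F} :=
  [set P : pt F | match P with
                  | inl (x, y) => y + kappa y == f (x + kappa x)
                  | inr None => true
                  | inr (Some _) => false
                  end].

(* Main.v *)
Require Import Defs.
From mathcomp Require Import all_boot all_order all_algebra all_field.
From mathcomp Require Import zify ring.
Import GRing.Theory.
Local Open Scope ring_scope.
Set Implicit Arguments. Unset Strict Implicit. Unset Printing Implicit Defensive.

Lemma sum_pred1_nat (T : finType) (P : pred T) (i0 : T) :
  (forall i, P i = (i == i0)) -> (\sum_(i : T) (P i : nat) = 1)%N.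
Proof.
move=> HP; rewrite (bigD1 i0) //= HP eqxx big1 // => i Hi; by rewrite HP (negbTE Hi).
Qed.

Lemma sum_option (T : finType) (G : option T -> nat) :
  (\sum_o G o = G None + \sum_a G (Some a))%N.
Proof.
rewrite (bigD1 None) //=; congr (_ + _)%N.
rewrite (reindex_omap Some id) /=; first by apply: eq_bigl => j; rewrite eqxx.
by case.
Qed.

Lemma eq_swap (F : zmodType) (y c b : F) : (y == c - b) = (b == c - y).
Proof. by apply/eqP/eqP => ->; rewrite opprB addrC subrK. Qed.

Lemma kap0 (F : finFieldType) (k : F -> F) :
  (forall x y, k (x+y) = k x + k y) -> k 0 = 0.
Proof. move=> kD; have h := kD 0 0; rewrite addr0 in h. by apply: (addrI (k 0)); rewrite addr0 -h. Qed.

Lemma kapN (F : finFieldType) (k : F -> F) :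
  (forall x y, k (x+y) = k x + k y) -> forall x, k (- x) = - k x.
Proof. move=> kD x; apply/eqP; rewrite -addr_eq0 -kD addNr kap0 //. Qed.

Lemma kapB (F : finFieldType) (k : F -> F) :
  (forall x y, k (x+y) = k x + k y) -> forall x y, k (x - y) = k x - k y.
Proof. by move=> kD x y; rewrite kD kapN. Qed.

Lemma incl_sym (F : finFieldType) (f k : F -> F) :
  (forall x y, k (x+y) = k x + k y) -> (forall x, k (k x) = x) ->
  (forall x, k (f x) = f (k x)) -> forall x y a b,
  (y == f (x + a) - b) = (k b == f (k a + k x) - k y).
Proof.
move=> kD kk kf x y a b.
by rewrite -[in LHS](inj_eq (can_inj kk)) kapB // kf kD eq_swap [k x + _]addrC.
Qed.

Lemma sum_pair (T1 T2 : finType) (G : T1 * T2 -> nat) :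
  (\sum_p G p = \sum_a \sum_b G (a, b))%N.
Proof. by rewrite pair_bigA; apply: eq_bigr => -[]. Qed.

Lemma sum_const_nat (T : finType) (c : nat) : (\sum_(i : T) c = #|T| * c)%N.
Proof. by rewrite sum_nat_const. Qed.

Definition Aff (F : finFieldType) (f k : F -> F) (p : F * F) : bool :=
  p.2 + k p.2 == f (p.1 + k p.1).
Definition incL (F : finFieldType) (f : F -> F) (l p : F * F) : bool :=
  p.2 == f (p.1 + l.1) - l.2.
Definition hk (F : finFieldType) (k : F -> F) (p : F * F) : F * F := (k p.1, k p.2).
Definition kc (F : finFieldType) (f k : F -> F) (l : F * F) : nat :=
  (\sum_p (Aff f k p * incL f l p))%N.

Lemma sum_incl (F : finFieldType) (f : F -> F) p :
  (\sum_l (incL f l p : nat) = #|F|)%N.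
Proof.
rewrite sum_pair -[RHS]muln1 -sum_const_nat; apply: eq_bigr => a _.
apply: (@sum_pred1_nat _ (fun b => incL f (a, b) p) (f (p.1 + a) - p.2)).
by move=> b; rewrite /incL /= eq_swap.
Qed.

Lemma fib0 (F : finFieldType) (f k : F -> F) (q : nat) :
  (forall x : F, #|[set y : F | y + k y == f (x + k x)]| = q) ->
  forall x, (\sum_b (Aff f k (x, b) : nat) = q)%N.
Proof.
move=> hq x; rewrite -(hq x) -sum1_card [RHS]big_mkcond /=; apply: eq_bigr => y _.
by rewrite inE /Aff /=; case: (_ == _).
Qed.

Lemma fiber (F : finFieldType) (f k : F -> F) (q : nat) :
  (forall x : F, #|[set y : F | y + k y == f (x + k x)]| = q) ->
  forall x, (\sum_p (Aff f k p * (p.1 == x)) = q)%N.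
Proof.
move=> hq x; rewrite sum_pair (bigD1 x) //= [X in (_ + X)%N]big1 => [|a Ha]; last first.
  by apply: big1 => b _; rewrite /= (negbTE Ha) muln0.
rewrite addn0 -(fib0 hq x); apply: eq_bigr => b _; by rewrite /= eqxx muln1.
Qed.

Lemma cardA (F : finFieldType) (f k : F -> F) (q : nat) :
  (forall x : F, #|[set y : F | y + k y == f (x + k x)]| = q) ->
  (\sum_p (Aff f k p : nat) = q * #|F|)%N.
Proof.
move=> hq; rewrite sum_pair mulnC -sum_const_nat; apply: eq_bigr => a _.
exact: fib0.
Qed.

Lemma line_uniq (F : finFieldType) (f : F -> F) : planar f ->
  forall p p' l l', p.1 != p'.1 -> incL f l p -> incL f l p' ->
  incL f l' p -> incL f l' p' -> l = l'.
Proof.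
move=> pf [x y] [x' y'] [a b] [a' b'] /= hx /eqP h1 /eqP h2 /eqP h3 /eqP h4.
simpl in h1, h2, h3, h4.
have hd : x - x' != 0 by rewrite subr_eq0.
have [g gK Kg] := pf (x - x') hd.
have hinj := can_inj gK.
have e1 : x' + a + (x - x') = x + a by ring.
have e2 : x' + a' + (x - x') = x + a' by ring.
have E : f (x' + a + (x - x')) - f (x' + a) = f (x' + a' + (x - x')) - f (x' + a').
  rewrite e1 e2.
  have -> : f (x + a) = y + b by rewrite h1 subrK.
  have -> : f (x' + a) = y' + b by rewrite h2 subrK.
  have -> : f (x + a') = y + b' by rewrite h3 subrK.
  have -> : f (x' + a') = y' + b' by rewrite h4 subrK.
  ring.
have ea : a = a' by apply: (addrI x'); apply: (hinj _ _ E).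
subst a'.
have eb : b = b'.
  have -> : b = f (x + a) - y by rewrite h1 opprB addrC subrK.
  by rewrite h3 opprB addrC subrK.
by rewrite eb.
Qed.

Lemma line_ex (F : finFieldType) (f : F -> F) : planar f ->
  forall p p', p.1 != p'.1 -> exists l, incL f l p && incL f l p'.
Proof.
move=> pf [x y] [x' y'] /= hx.
have hd : x - x' != 0 by rewrite subr_eq0.
have [g gK Kg] := pf (x - x') hd.
set z := g (y - y').
have hz : f (z + (x - x')) - f z = y - y' := Kg (y - y').
exists (z - x', f z - y'); rewrite /incL /=; apply/andP; split; apply/eqP.
- have -> : x + (z - x') = z + (x - x') by ring.
  have -> : f (z + (x - x')) = y - y' + f z by rewrite -hz subrK.
  ring.
- have -> : x' + (z - x') = z by ring.
  ring.
Qed.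

Lemma cnt2 (F : finFieldType) (f : F -> F) : planar f -> forall p p',
  (\sum_l (incL f l p * incL f l p') = (p == p') * #|F| + (p.1 != p'.1))%N.
Proof.
move=> pf p p'; case: (eqVneq p p') => [<-|hne].
  rewrite eqxx /= mul1n addn0; under eq_bigr do rewrite mulnb andbb.
  exact: sum_incl.
case: (eqVneq p.1 p'.1) => hx.
  rewrite /= big1 // => l _; rewrite mulnb; case: andP => // -[h1 h2]; exfalso.
  move: p p' hne hx h1 h2 => [x y] [x' y'] /= hne hx /eqP h1 /eqP h2.
  simpl in h1, h2, hx; subst x'.
  by move: hne; rewrite h1 h2 eqxx.
rewrite /= mul0n add0n; under eq_bigr do rewrite mulnb.
have [l0 /andP[h1 h2]] := line_ex pf hx.
apply: (@sum_pred1_nat _ (fun l => incL f l p && incL f l p') l0).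
move=> l; apply/andP/eqP => [[a b]|->]; last by [].
exact: (line_uniq pf hx a b h1 h2).
Qed.

Lemma S1 (F : finFieldType) (f k : F -> F) (q : nat) :
  (forall x : F, #|[set y : F | y + k y == f (x + k x)]| = q) ->
  (\sum_l kc f k l = q * #|F| * #|F|)%N.
Proof.
move=> hq; rewrite /kc exchange_big /=.
under eq_bigr do rewrite -big_distrr /= sum_incl.
by rewrite -big_distrl /= (cardA hq).
Qed.

Lemma S2 (F : finFieldType) (f k : F -> F) (q : nat) : planar f ->
  (forall x : F, #|[set y : F | y + k y == f (x + k x)]| = q) ->
  (\sum_l (kc f k l * kc f k l) = q * #|F| * (#|F| + (q * #|F| - q)))%N.
Proof.
move=> pf hq.
have E : forall l, (kc f k l * kc f k l = \sum_p \sum_p'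
    ((Aff f k p * incL f l p) * (Aff f k p' * incL f l p')))%N.
  by move=> l; rewrite /kc big_distrl; apply: eq_bigr => p _; rewrite big_distrr.
rewrite (eq_bigr _ (fun l _ => E l)) exchange_big /=.
under eq_bigr do rewrite exchange_big /=.
have E2 : forall p p', (\sum_l ((Aff f k p * incL f l p) * (Aff f k p' * incL f l p'))
   = Aff f k p * (Aff f k p' * ((p' == p) * #|F| + (p.1 != p'.1))))%N.
  move=> p p'; under eq_bigr do rewrite mulnACA.
  by rewrite -big_distrr /= (cnt2 pf) mulnA (eq_sym p').
under eq_bigr do under eq_bigr do rewrite E2.
have E3 : forall p, Aff f k p -> (\sum_p' (Aff f k p' * ((p' == p) * #|F| + (p.1 != p'.1)))
    = #|F| + (q * #|F| - q))%N.
  move=> p Ap; under eq_bigr do rewrite mulnDr; rewrite big_split /=.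
  congr (_ + _)%N.
    rewrite (bigD1 p) //= eqxx Ap !mul1n big1 ?addn0 // => p' Hp'.
    by rewrite (negbTE Hp') mul0n muln0.
  have h := cardA hq.
  rewrite (eq_bigr (fun p' => Aff f k p' * (p'.1 == p.1) + Aff f k p' * (p.1 != p'.1)))%N in h; last first.
    by move=> p' _; rewrite [p'.1 == p.1]eq_sym; case: (p.1 == p'.1); rewrite /= ?muln1 ?muln0 ?addn0.
  by move: h; rewrite big_split /= (fiber hq) => <-; rewrite addKn.
have E4 : forall p, (\sum_p' Aff f k p * (Aff f k p' * ((p' == p) * #|F| + (p.1 != p'.1)))
    = Aff f k p * (#|F| + (q * #|F| - q)))%N.
  move=> p; rewrite -big_distrr /=; case Ap: (Aff f k p); last by rewrite !mul0n.
  by rewrite !mul1n E3.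
under eq_bigr do rewrite E4.
by rewrite -big_distrl /= (cardA hq).
Qed.

Lemma hkK (F : finFieldType) (k : F -> F) : (forall x, k (k x) = x) -> cancel (hk k) (hk k).
Proof. by move=> kk [x y]; rewrite /hk /= !kk. Qed.

Lemma incL_self (F : finFieldType) (f k : F -> F) p : incL f (hk k p) p = Aff f k p.
Proof. by rewrite /incL /Aff /= eq_sym subr_eq eq_sym. Qed.

Lemma incL_sym (F : finFieldType) (f k : F -> F) :
  (forall x y, k (x+y) = k x + k y) -> (forall x, k (k x) = x) ->
  (forall x, k (f x) = f (k x)) ->
  forall p p', incL f (hk k p') p = incL f (hk k p) p'.
Proof.
move=> kD kk kf [x y] [x' y']; rewrite /incL /= (incl_sym kD kk kf) !kk.
done.
Qed.

Lemma kc_abs (F : finFieldType) (f k : F -> F) : planar f ->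
  (forall x y, k (x+y) = k x + k y) -> (forall x, k (k x) = x) ->
  (forall x, k (f x) = f (k x)) ->
  forall p0, Aff f k p0 -> kc f k (hk k p0) = 1%N.
Proof.
move=> pf kD kk kf p0 A0.
rewrite /kc; under eq_bigr do rewrite mulnb.
apply: (@sum_pred1_nat _ (fun p => Aff f k p && incL f (hk k p0) p) p0) => p.
apply/andP/eqP => [[Ap ip]|->]; last by rewrite incL_self.
case: (eqVneq p.1 p0.1) => hx.
  move: p p0 hx ip A0 Ap => [x y] [x0 y0] /= hx ip A0 _.
  rewrite /incL /Aff /= in ip A0; subst x0.
  by move/eqP: ip => ->; move/eqP: A0 => <-; rewrite addrK.
have ip' : incL f (hk k p) p0 by rewrite -(incL_sym kD kk kf).
have h0 : incL f (hk k p0) p0 by rewrite incL_self.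
have hp : incL f (hk k p) p by rewrite incL_self.
have e := line_uniq pf hx ip h0 hp ip'.
by apply: (can_inj (hkK kk)); rewrite e.
Qed.

Lemma dsq (k m : nat) : (((k - m) + (m - k)) * ((k - m) + (m - k)) + 2 * m * k = k * k + m * m)%N.
Proof. nia. Qed.

Lemma kc_nonabs (F : finFieldType) (f k : F -> F) (q : nat) : planar f ->
  (forall x y, k (x+y) = k x + k y) -> (forall x, k (k x) = x) ->
  (forall x, k (f x) = f (k x)) -> #|F| = (q ^ 2)%N ->
  (forall x : F, #|[set y : F | y + k y == f (x + k x)]| = q) ->
  forall l, ~~ Aff f k (hk k l) -> kc f k l = q.+1.
Proof.
move=> pf kD kk kf hF hq.
pose d l := ((kc f k l - q.+1) + (q.+1 - kc f k l))%N.
have Hs : (\sum_l d l * d l = q ^ 5)%N.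
  have H : (\sum_l (d l * d l + 2 * q.+1 * kc f k l) = \sum_l (kc f k l * kc f k l + q.+1 * q.+1))%N.
    by apply: eq_bigr => l _; rewrite /d dsq.
  set X := (\sum_l d l * d l)%N.
  have e1 : (\sum_l (d l * d l + 2 * q.+1 * kc f k l) = X + 2 * q.+1 * (q * #|F| * #|F|))%N.
    by rewrite big_split -big_distrr (S1 hq).
  have e2 : (\sum_l (kc f k l * kc f k l + q.+1 * q.+1) =
      q * #|F| * (#|F| + (q * #|F| - q)) + #|F| * #|F| * (q.+1 * q.+1))%N.
    by rewrite big_split (S2 pf hq) sum_const_nat card_prod.
  move: H; rewrite e1 e2 hF !expnS expn0 !muln1.
  have hq3 : (q <= q * (q * q))%N by nia.
  rewrite addnBA // mulnBr.
  have hq4 : (q * (q * q) * q <= q * (q * q) * (q * q + q * (q * q)))%N.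
    by rewrite leq_mul2l; apply/orP; right; nia.
  move: hq4; set B := (q * (q * q) * (q * q + q * (q * q)))%N.
  set C := (q * (q * q) * q)%N => hq4 h.
  have h' : (X + 2 * q.+1 * (q * (q * q) * (q * q)) + C = B + q * q * (q * q) * (q.+1 * q.+1))%N.
    by rewrite h addnAC subnK.
  move: h'; rewrite /B /C; nia.
have Ha : (\sum_l Aff f k (hk k l) * (d l * d l) = q ^ 5)%N.
  rewrite (eq_bigr (fun l => Aff f k (hk k l) * (q * q)))%N; last first.
    move=> l _; case A: (Aff f k (hk k l)); rewrite ?mul0n // !mul1n.
    have := kc_abs pf kD kk kf A; rewrite (hkK kk) => e.
    by rewrite /d e; nia.
  have R : (\sum_p Aff f k p * (q * q) = \sum_l Aff f k (hk k l) * (q * q))%N.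
    exact: (reindex_inj (can_inj (hkK kk))).
  rewrite -R.
  rewrite -big_distrl /= (cardA hq) hF.
  by rewrite !expnS expn0; ring.
have Hn : (\sum_l (~~ Aff f k (hk k l)) * (d l * d l) = 0)%N.
  have : (\sum_l d l * d l = \sum_l (Aff f k (hk k l) * (d l * d l) + (~~ Aff f k (hk k l)) * (d l * d l)))%N.
    by apply: eq_bigr => l _; case: (Aff f k (hk k l)); rewrite /= ?mul1n ?mul0n ?addn0.
  by rewrite big_split /= Hs Ha => /eqP; rewrite -{1}[(q ^ 5)%N]addn0 eqn_add2l => /eqP.
move=> l nA.
move/eqP: Hn; rewrite sum_nat_eq0 => /forallP /(_ l).
rewrite nA mul1n /d => /eqP h; nia.
Qed.

Lemma card_pt (F : finFieldType) (S : {set pt F}) :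
  #|S| = (\sum_p (inl p \in S : nat) + ((inr None \in S : nat) + \sum_a (inr (Some a) \in S : nat)))%N.
Proof. by rewrite -sum1_card big_mkcond big_sumType sum_option /=. Qed.

Theorem lemma4p1 (q : nat) (F : finFieldType) (f kappa : F -> F) :
  (exists p k : nat, [/\ prime p, (0 < k)%N & q = (p ^ k)%N]) ->
  odd q ->
  #|F| = (q ^ 2)%N ->
  planar f ->
  (forall x y : F, kappa (x + y) = kappa x + kappa y) ->
  (forall x : F, kappa (kappa x) = x) ->
  (forall x : F, kappa (f x) = f (kappa x)) ->
  (forall x : F, #|[set y : F | y + kappa y == f (x + kappa x)]| = q) ->
  bijective (rho_kappa kappa) /\
  (forall sigma : ln F -> pt F, cancel (rho_kappa kappa) sigma ->
     is_polarity f (rho_kappa kappa) sigma) /\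
  #|absolute_points f (rho_kappa kappa)| = (q ^ 3 + 1)%N /\
  absolute_points f (rho_kappa kappa) = U_kappa f kappa /\
  is_unital f q (U_kappa f kappa).
Proof.
move=> _ _ hF pf kD kk kf hq.
have rr : cancel (rho_kappa kappa) (rho_kappa kappa).
  by case=> [[x y]|[a|]] //=; rewrite !kk.
have AU : absolute_points f (rho_kappa kappa) = U_kappa f kappa.
  apply/setP => -[[x y]|[a|]]; rewrite !inE //=.
  exact: (incL_self f kappa (x, y)).
have cardU : #|U_kappa f kappa| = (q ^ 3 + 1)%N.
  rewrite card_pt [X in (_ + (_ + X))%N]big1; last by move=> a _; rewrite inE.
  rewrite inE addn0.
  have -> : (\sum_p (inl p \in U_kappa f kappa : nat) = \sum_p (Aff f kappa p : nat))%N.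
    by apply: eq_bigr => -[x y] _; rewrite inE.
  by rewrite (cardA hq) hF -expnS.
split; first by exists (rho_kappa kappa).
split.
  move=> sigma hs.
  have sr : forall l, sigma l = rho_kappa kappa l by move=> l; rewrite -{1}(rr l) hs.
  split; first exact: hs.
  split; first by move=> l; rewrite sr rr.
  move=> P l; rewrite sr.
  case: P => [[x y]|[a|]]; case: l => [[a' b]|[c|]] //=.
  - exact: incl_sym.
  - by rewrite (inj_eq (can_inj kk)) eq_sym.
  - by rewrite (inj_eq (can_inj kk)) eq_sym.
split; first by rewrite AU.
split; first exact: AU.
split; first exact: cardU.
move=> l; rewrite card_pt.
case: l => [l|[a|]].
- have E : (\sum_p (inl p \in [set P in U_kappa f kappa | incid f P (inl l)] : nat) = kc f kappa l)%N.
    by apply: eq_bigr => -[x y] _; rewrite !inE mulnb; case: l.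
  rewrite E big1; last by move=> a _; rewrite !inE.
  rewrite !inE /= addn0.
  case: (boolP (Aff f kappa (hk kappa l))) => h.
    have := kc_abs pf kD kk kf h; rewrite (hkK kk) => ->.
    by rewrite addn0 eqxx.
  by rewrite addn0 (kc_nonabs pf kD kk kf hF hq h) eqxx orbT.
- have E : (\sum_p (inl p \in [set P in U_kappa f kappa | incid f P (inr (Some a))] : nat)
      = \sum_p (Aff f kappa p * (p.1 == a)))%N.
    by apply: eq_bigr => -[x y] _; rewrite !inE mulnb.
  rewrite E (fiber hq) big1; last by move=> b _; rewrite !inE.
  by rewrite !inE /= addn0 addn1 eqxx orbT.
- rewrite big1; last by move=> -[x y] _; rewrite !inE andbF.
  rewrite big1; last by move=> b _; rewrite !inE.
  by rewrite !inE.
Qed.
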